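(* Let $2\le m\le n\le\ell$ with $(m-1)n<\ell<mn$. Then $\ell$ is the unique typical rank of real $m\times n\times\ell$ tensors.
   Context: An integer $r>0$ is a typical rank for the format $m\times n\times\ell$ if $\Pr\{\mathrm{rank}(T)=r\}>0$ for a tensor $T\in\mathbb R^{m\times n\times\ell}$ with i.i.d. standard Gaussian entries; rank is the minimal number of rank-one tensors $a\otimes b\otimes c$ summing to $T$. *)

(* Defs.v *)
From HB Require Import structures.
From mathcomp Require Import all_boot all_order all_algebra.
From mathcomp Require Import all_classical all_reals all_analysis.

Set Implicit Arguments.
Unset Strict Implicit.
Unset Printing Implicit Defensive.

Import Order.TTheory GRing.Theory Num.Theory.

Local Open Scope classical_set_scope.
Local Open Scope ring_scope.

Definition tensor (R : Type) (m n l : nat) := 'I_m -> 'I_n -> 'I_l -> R.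

Definition rank_le {R : realType} {m n l : nat} (T : tensor R m n l) (r : nat) : Prop :=
  exists (a : 'I_r -> 'I_m -> R) (b : 'I_r -> 'I_n -> R) (c : 'I_r -> 'I_l -> R),
    forall i j k, T i j k = \sum_(p < r) a p i * b p j * c p k.

Definition tensor_rank_eq {R : realType} {m n l : nat} (T : tensor R m n l) (r : nat) : Prop :=
  rank_le T r /\ forall r', rank_le T r' -> (r <= r')%N.

Definition tensor_of_seq {R : realType} (m n l : nat) (s : seq R) : tensor R m n l :=
  fun i j k => nth 0 s ((i * n + j) * l + k)%N.
Arguments tensor_of_seq {R} m n l s.

(* Iterated integral against N independent standard Gaussians:
   gauss_iter N f = \int phi(x_N) ... \int phi(x_1) f [:: x_1; ...; x_N]. *)
Fixpoint gauss_iter {R : realType} (N : nat) (f : seq R -> \bar R) : \bar R :=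
  match N with
  | 0 => f [::]
  | N'.+1 => gauss_iter N' (fun s => (\int[normal_prob (0:R) 1]_x f (x :: s))%E)
  end.

(* Probability that an m x n x l tensor with i.i.d. standard Gaussian entries
   lies in the set A (standard Gaussian measure on R^(m*n*l), by Fubini). *)
Definition gauss_tensor_prob {R : realType} (m n l : nat) (A : set (tensor R m n l)) : \bar R :=
  gauss_iter (m * n * l)%N
    (fun s : seq R => (@indic (tensor R m n l) R A (tensor_of_seq m n l s))%:E).

Arguments gauss_tensor_prob {R} m n l A.

Definition typical_rank (R : realType) (m n l r : nat) : Prop :=
  (0 < r)%N /\
  (0 < gauss_tensor_prob m n l [set T : tensor R m n l | tensor_rank_eq T r])%E.

(* Main.v *)
Require Import Defs.
From HB Require Import structures.
From mathcomp Require Import all_boot all_order all_algebra.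
From mathcomp Require Import all_classical all_reals all_analysis.
From mathcomp Require Import ring lra zify.
Set Implicit Arguments.
Unset Strict Implicit.
Unset Printing Implicit Defensive.
Import Order.TTheory GRing.Theory Num.Theory.
Local Open Scope classical_set_scope.
Local Open Scope ring_scope.
Section AE.
Variable R : realType.

Lemma int_mono d (T : measurableType d) (mu : {measure set T -> \bar R}) (f g : T -> \bar R) :
  (forall x, (0 <= f x)%E) -> (forall x, (f x <= g x)%E) ->
  (\int[mu]_x f x <= \int[mu]_x g x)%E.
Proof.
move=> f0 fg.
have g0 : forall x, (0 <= g x)%E by move=> x; exact: le_trans (f0 x) (fg x).
rewrite (ge0_integralTE _ f0) (ge0_integralTE _ g0) /=.
apply: ereal_sup_le => _ [h hf <-]; exists h => //= x.
exact: le_trans (hf x) (fg x).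
Qed.

Local Notation mu := (@normal_prob R 0 1).

Lemma int_cst1 : (\int[mu]_x (1%E : \bar R))%E = 1%E.
Proof.
by rewrite integral_cst //= probability_setT mul1e.
Qed.

Lemma fin_meas (rs : seq R) : measurable [set` rs].
Proof.
apply: countable_measurable; first by move=> t; exact: measurable_set1.
exact/finite_set_countable/finite_seq.
Qed.

Lemma prob_fin0 (rs : seq R) : mu [set` rs] = 0%E.
Proof.
apply: (normal_prob_dominates 0 1 _ (fin_meas rs) (@subset_refl _ _)).
move=> A mA sA; apply: countable_lebesgue_measure0.
apply: (sub_countable _ (finite_set_countable (finite_seq rs))).
exact: subset_card_le.
Qed.

Lemma prob_cofin1 (rs : seq R) : mu (~` [set` rs]) = 1%E.
Proof.
rewrite probability_setC ?fin_meas //.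
rewrite [X in (_ - X)%E](_ : _ = 0%E); last exact: prob_fin0.
  by rewrite sube0.
all: exact: fin_meas.
Qed.
End AE.
Section Roots.
Variable R : realType.
Lemma poly_roots_fin (p : {poly R}) : p != 0 ->
  exists rs : seq R, forall x, p.[x] = 0 -> x \in rs.
Proof.
move: {2}(size p) (leqnn (size p)) => k; elim: k p => [|k IH] p.
  by rewrite leqn0 size_poly_eq0 => ->.
move=> sp p0.
have [[a ra]|nr] := pselect (exists a, p.[a] = 0); last first.
  by exists [::] => x px; exfalso; apply: nr; exists x.
have /factor_theorem [q pq] : root p a by apply/rootP.
have q0 : q != 0 by apply: contraNneq p0 => q0; rewrite pq q0 mul0r.
have sq : (size q <= k)%N.
  move: sp; rewrite pq size_mul ?polyXsubC_eq0 // size_XsubC addn2 /=.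
  by [].
have [rs Hrs] := IH q sq q0.
exists (a :: rs) => x; rewrite pq hornerM hornerXsubC => /eqP.
rewrite mulf_eq0 => /orP [/eqP/Hrs xr|]; first by rewrite in_cons xr orbT.
by rewrite subr_eq0 => /eqP ->; rewrite in_cons eqxx.
Qed.
End Roots.
Section PolyFun.
Variable R : realType.
Implicit Types (f g : seq R -> R).

Fixpoint ispoly (N : nat) (f : seq R -> R) : Prop :=
  match N with
  | 0 => exists a : R, forall s, f s = a
  | N'.+1 => exists (I : finType) (c : I -> seq R -> R) (e : I -> nat),
      (forall i, ispoly N' (c i)) /\
      forall x s, f (x :: s) = \sum_(i : I) c i s * x ^+ e i
  end.

Lemma ispoly_ext N f g : (forall s, f s = g s) -> ispoly N f -> ispoly N g.
Proof. by move=> fg; have -> : f = g by apply/funext. Qed.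

Lemma ispoly_cst N (a : R) : ispoly N (fun _ => a).
Proof.
elim: N a => [|N IH] a; first by exists a.
exists 'I_1, (fun _ _ => a), (fun _ => 0%N); split => // x s.
by rewrite big_ord1 expr0 mulr1.
Qed.

Lemma ispoly_add N f g : ispoly N f -> ispoly N g -> ispoly N (fun s => f s + g s).
Proof.
elim: N f g => [|N IH] f g.
  by move=> [a fa] [b gb]; exists (a + b) => s; rewrite fa gb.
move=> [I1 [c1 [e1 [h1 E1]]]] [I2 [c2 [e2 [h2 E2]]]].
exists (I1 + I2)%type, (fun t => match t with inl i => c1 i | inr j => c2 j end),
  (fun t => match t with inl i => e1 i | inr j => e2 j end); split.
  by case.
by move=> x s; rewrite big_sumType /= E1 E2.
Qed.

Lemma ispoly_mul N f g : ispoly N f -> ispoly N g -> ispoly N (fun s => f s * g s).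
Proof.
elim: N f g => [|N IH] f g.
  by move=> [a fa] [b gb]; exists (a * b) => s; rewrite fa gb.
move=> [I1 [c1 [e1 [h1 E1]]]] [I2 [c2 [e2 [h2 E2]]]].
exists (I1 * I2)%type, (fun t => fun s => c1 t.1 s * c2 t.2 s),
  (fun t => (e1 t.1 + e2 t.2)%N); split.
  by case=> i j /=; apply: IH; [exact: h1|exact: h2].
move=> x s; rewrite E1 E2 big_distrlr /= pair_bigA /=.
by apply: eq_bigr => -[i j] _ /=; rewrite exprD; ring.
Qed.

Lemma ispoly_sum N (I : Type) (r : seq I) (F : I -> seq R -> R) :
  (forall i, ispoly N (F i)) -> ispoly N (fun s => \sum_(i <- r) F i s).
Proof.
move=> H; elim: r => [|a r IHr].
  by apply: (ispoly_ext (f := fun _ => 0)); [move=> s; rewrite big_nil|exact: ispoly_cst].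
apply: (ispoly_ext (f := fun s => F a s + \sum_(i <- r) F i s)).
  by move=> s; rewrite big_cons.
exact: ispoly_add.
Qed.

Lemma ispoly_prod N (I : Type) (r : seq I) (F : I -> seq R -> R) :
  (forall i, ispoly N (F i)) -> ispoly N (fun s => \prod_(i <- r) F i s).
Proof.
move=> H; elim: r => [|a r IHr].
  by apply: (ispoly_ext (f := fun _ => 1)); [move=> s; rewrite big_nil|exact: ispoly_cst].
apply: (ispoly_ext (f := fun s => F a s * \prod_(i <- r) F i s)).
  by move=> s; rewrite big_cons.
exact: ispoly_mul.
Qed.

Lemma ispoly_sumF N (I : finType) (P : pred I) (F : I -> seq R -> R) :
  (forall i, ispoly N (F i)) -> ispoly N (fun s => \sum_(i | P i) F i s).
Proof.
move=> H; apply: (ispoly_ext (f := fun s => \sum_(i <- enum I) (if P i then F i s else 0))).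
  by move=> s; rewrite [RHS]big_mkcond /= big_enum.
apply: ispoly_sum => i; case: (P i) => //; exact: ispoly_cst.
Qed.

Lemma ispoly_prodF N (I : finType) (F : I -> seq R -> R) :
  (forall i, ispoly N (F i)) -> ispoly N (fun s => \prod_(i : I) F i s).
Proof.
move=> H; apply: (ispoly_ext (f := fun s => \prod_(i <- enum I) F i s)).
  by move=> s; rewrite big_enum.
exact: ispoly_prod.
Qed.

Lemma ispoly_nth N i : (i < N)%N -> ispoly N (fun s => nth 0 s i).
Proof.
elim: N i => [|N IH] i //.
case: i => [|i] /= Hi.
  exists 'I_1, (fun _ _ => 1), (fun _ => 1%N); split; first by move=> _; exact: ispoly_cst.
  by move=> x s; rewrite big_ord1 mul1r expr1.
exists 'I_1, (fun _ s => nth 0 s i), (fun _ => 0%N); split; first by move=> _; exact: IH.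
by move=> x s; rewrite big_ord1 expr0 mulr1.
Qed.

End PolyFun.
Section AEpoly.
Variable R : realType.
Local Notation mu := (@normal_prob R 0 1).

Definition prep (I : finType) (c : I -> R) (e : I -> nat) : {poly R} :=
  \sum_(t : I) c t *: 'X^(e t).

Lemma prep_coef (I : finType) (c : I -> R) (e : I -> nat) k :
  (prep c e)`_k = \sum_(t : I) c t * (e t == k)%:R.
Proof.
rewrite /prep coef_sum; apply: eq_bigr => t _.
by rewrite coefZ coefXn eq_sym.
Qed.

Lemma prep_horner (I : finType) (c : I -> R) (e : I -> nat) x :
  (prep c e).[x] = \sum_(t : I) c t * x ^+ e t.
Proof.
rewrite /prep horner_sum; apply: eq_bigr => t _.
by rewrite hornerZ hornerXn.
Qed.

Lemma int_ge1 (h : R -> \bar R) (rs : seq R) :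
  (forall x, (0 <= h x)%E) -> (forall x, x \notin rs -> (1 <= h x)%E) ->
  (1 <= \int[mu]_x h x)%E.
Proof.
move=> h0 h1.
apply: (@le_trans _ _ (\int[mu]_x (\1_(~` [set` rs]) x)%:E)%E).
  rewrite integral_indic //; last by apply: measurableC; exact: fin_meas.
  rewrite setIT [X in (_ <= X)%E](_ : _ = 1%E) //; exact: prob_cofin1.
apply: int_mono => x; first by rewrite lee_fin.
rewrite /indic /=; have [xin|xout] := boolP (x \in ~` [set` rs]).
  have xr : x \notin rs by apply/negP => xr; move: xin; rewrite inE /=; apply.
  by rewrite mulr1n; exact: h1.
by rewrite mulr0n; exact: h0.
Qed.

Lemma int_le0 (h : R -> \bar R) (rs : seq R) :
  (forall x, (0 <= h x)%E /\ (h x <= 1)%E) -> (forall x, x \notin rs -> h x = 0%E) ->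
  (\int[mu]_x h x <= 0)%E.
Proof.
move=> h01 h0.
apply: (@le_trans _ _ (\int[mu]_x (\1_([set` rs]) x)%:E)%E).
  apply: int_mono => x; first by have [] := h01 x.
  rewrite /indic /=; have [xin|xout] := boolP (x \in [set` rs]).
    by rewrite mulr1n; have [] := h01 x.
  have xr : x \notin rs by apply/negP => xr; move/negP: xout; apply; rewrite inE.
  by rewrite mulr0n h0.
rewrite integral_indic //; last exact: fin_meas.
rewrite setIT [X in (X <= _)%E](_ : _ = 0%E) //; exact: prob_fin0.
Qed.

Lemma int_le1 (h : R -> \bar R) :
  (forall x, (0 <= h x)%E /\ (h x <= 1)%E) -> (\int[mu]_x h x <= 1)%E.
Proof.
move=> h01; rewrite -int_cst1; apply: int_mono => x; by have [] := h01 x.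
Qed.

Lemma ispoly_coef N (I : finType) (c : I -> seq R -> R) (e : I -> nat) k :
  (forall i, ispoly N (c i)) ->
  ispoly N (fun s => \sum_(t : I) c t s * (e t == k)%:R).
Proof.
move=> hc; apply: (@ispoly_sumF _ _ _ xpredT) => t.
apply: ispoly_mul => //; exact: ispoly_cst.
Qed.

Lemma coef_witness (I : finType) (c : I -> seq R -> R) (e : I -> nat) s x :
  \sum_(t : I) c t s * x ^+ e t != 0 ->
  exists k, \sum_(t : I) c t s * (e t == k)%:R != 0.
Proof.
move=> H; case: (pselect (exists k, \sum_(t : I) c t s * (e t == k)%:R != 0)) => // Hk.
exfalso; move: H; rewrite -prep_horner.
have -> : prep (fun t => c t s) e = 0.
  apply/polyP => k; rewrite prep_coef coef0.
  by apply/eqP; apply/negPn/negP => nz; apply: Hk; exists k.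
by rewrite horner0 eqxx.
Qed.

Lemma roots_of (I : finType) (c : I -> seq R -> R) (e : I -> nat) s k :
  \sum_(t : I) c t s * (e t == k)%:R != 0 ->
  exists rs : seq R, forall x, x \notin rs -> \sum_(t : I) c t s * x ^+ e t != 0.
Proof.
move=> H.
have p0 : prep (fun t => c t s) e != 0.
  by apply: contraNneq H => p0; rewrite -prep_coef p0 coef0.
have [rs Hrs] := poly_roots_fin p0.
exists rs => x xr; rewrite -prep_horner; apply/eqP => px.
by move: xr; rewrite (Hrs _ px).
Qed.

Lemma gauss_ae1 N f : ispoly N f -> forall s0, size s0 = N -> f s0 != 0 ->
  forall g : seq R -> \bar R, (forall s, (0 <= g s)%E) ->
  (forall s, f s != 0 -> (1 <= g s)%E) -> (1 <= gauss_iter N g)%E.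
Proof.
elim: N f => [|N IH] f.
  move=> [a fa] [|//] _ f0 g g0 g1 /=; exact: g1.
move=> [I [c [e [hc E]]]] [|x0 s0] //= [sz] f0 g g0 g1.
rewrite E in f0.
have [k Hk] := coef_witness f0.
have hk := @ispoly_coef N I c e k hc.
have := IH _ hk s0 sz Hk. move=> HH. apply: HH.
  by move=> s; apply: integral_ge0 => x _; exact: g0.
move=> s /roots_of [rs Hrs]; apply: (int_ge1 (rs := rs)) => [x|x xr]; first exact: g0.
by apply: g1; rewrite E; exact: Hrs.
Qed.

Lemma gauss_ae0 N f : ispoly N f -> forall s0, size s0 = N -> f s0 != 0 ->
  forall g : seq R -> \bar R, (forall s, (0 <= g s)%E /\ (g s <= 1)%E) ->
  (forall s, f s != 0 -> g s = 0%E) -> (gauss_iter N g <= 0)%E.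
Proof.
elim: N f => [|N IH] f.
  move=> [a fa] [|//] _ f0 g g01 g0 /=; by rewrite g0.
move=> [I [c [e [hc E]]]] [|x0 s0] //= [sz] f0 g g01 g0.
rewrite E in f0.
have [k Hk] := coef_witness f0.
have hk := @ispoly_coef N I c e k hc.
have := IH _ hk s0 sz Hk. move=> HH. apply: HH.
  move=> s; split; first by apply: integral_ge0 => x _; have [] := g01 (x :: s).
  by apply: int_le1 => x; exact: g01.
move=> s /roots_of [rs Hrs]; apply/eqP; rewrite eq_le; apply/andP; split.
  apply: (int_le0 (rs := rs)) => [x|x xr]; first exact: g01.
  by apply: g0; rewrite E; exact: Hrs.
by apply: integral_ge0 => x _; have [] := g01 (x :: s).
Qed.
End AEpoly.
Section AdjKer.
Variable R : realType.
Variable l' : nat.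
Local Notation l := l'.+1.
Lemma adj_ker (A : 'M[R]_l) (r : 'I_l) : r != ord_max ->
  \sum_k A r k * \adj A k ord_max = 0.
Proof.
move=> rn; have := congr1 (fun B : 'M[R]_l => B r ord_max) (mul_mx_adj A).
rewrite !mxE (negbTE rn) mulr0n. by [].
Qed.

End AdjKer.

Section Alg.
Variable R : realType.
Variables (m' n' l' : nat).
Local Notation m := m'.+1.
Local Notation n := n'.+1.
Local Notation l := l'.+1.
Definition M1 := (m' * n)%N.
Hypothesis HM1 : (M1 < l)%N.
Variables (cx : nat -> nat -> R) (cpi : nat -> nat) (cJ : nat -> nat -> nat).
Hypothesis Hpiv : forall p : 'I_l, (cpi p < m)%N /\ cx p (cpi p) = 1.

Definition Text (T : tensor R m n l) (i j : nat) (k : 'I_l) : R :=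
  T (inord i) (inord j) k.

Definition Base (T : tensor R m n l) (p : nat) : 'M[R]_l := \matrix_(r < l, k < l)
  if (r < M1)%N then
    Text T (bump (cpi p) (r %/ n)) (r %% n) k
     - cx p (bump (cpi p) (r %/ n)) * Text T (cpi p) (r %% n) k
  else if (r < l')%N then ((k : nat) == cJ p (r - M1))%:R else 0.

Definition Cmat (T : tensor R m n l) : 'M[R]_l :=
  \matrix_(p < l, k < l) \adj (Base T p) k ord_max.

Lemma key_rel (T : tensor R m n l) (p : 'I_l) (i : 'I_m) (j : 'I_n) :
  \sum_k Cmat T p k * T i j k =
  cx p i * \sum_k Cmat T p k * T (inord (cpi p)) j k.
Proof.
have [pm px] := Hpiv p.
have [ip|inp] := eqVneq (i : nat) (cpi p).
  have -> : inord (cpi p) = i by apply/val_inj; rewrite /= inordK // -ip.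
  by rewrite ip px mul1r.
have ui : (unbump (cpi p) i < m')%N.
  have := ltn_ord i; have := pm; move: inp; rewrite /unbump.
  case: ltnP => /= H; move/eqP => H1 H2 H3; lia.
set r := (unbump (cpi p) i * n + j)%N.
have rM1 : (r < M1)%N.
  rewrite /r /M1; have := ltn_ord j; move: ui; set u := unbump _ _; nia.
have rl : (r < l)%N by apply: ltn_trans rM1 HM1.
have rn : Ordinal rl != ord_max.
  apply/eqP => /(congr1 val) /= rE; move: HM1 rM1; rewrite rE /M1; lia.
have := adj_ker (Base T p) rn.
have rdiv : (r %/ n = unbump (cpi p) i)%N.
  by rewrite /r divnMDl // divn_small // addn0.
have rmod : (r %% n = j)%N by rewrite /r modnMDl modn_small.
have bi : bump (cpi p) (unbump (cpi p) i) = i by rewrite unbumpK //= inE eq_sym.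
under eq_bigr => k _ do rewrite mxE /= rM1 rdiv rmod bi.
move=> H.
have Ti : forall k, Text T i j k = T i j k.
  by move=> k; rewrite /Text !inord_val.
have Tp : forall k, Text T (cpi p) j k = T (inord (cpi p)) j k.
  by move=> k; rewrite /Text inord_val.
transitivity (\sum_k (Text T i j k - cx p i * Text T (cpi p) j k) * \adj (Base T p) k ord_max
   + cx p i * \sum_k Cmat T p k * T (inord (cpi p)) j k).
  rewrite mulr_sumr -big_split /=.
  apply: eq_bigr => k _; rewrite Ti Tp !mxE; ring.
by rewrite H add0r.
Qed.


Lemma base_constr (T : tensor R m n l) (p : 'I_l) (c : 'I_l -> R) :
  (forall r : 'I_l, r != ord_max -> \sum_k Base T p r k * c k = 0) ->
  (forall i j, (i < m)%N -> (j < n)%N -> i != cpi p ->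
     \sum_k Text T i j k * c k = cx p i * \sum_k Text T (cpi p) j k * c k) /\
  (forall t, (M1 + t < l')%N -> \sum_(k < l) ((k:nat) == cJ p t)%:R * c k = 0).
Proof.
move=> Hc; have [pm px] := Hpiv p; split.
  move=> i j im jn inp.
  have ui : (unbump (cpi p) i < m')%N.
    move: im pm inp; rewrite /unbump.
    case: ltnP => /= H; move=> H2 H3 /eqP H1; lia.
  set r := (unbump (cpi p) i * n + j)%N.
  have rM1 : (r < M1)%N.
    rewrite /r /M1; move: jn ui; set u := unbump _ _; nia.
  have rl : (r < l)%N by apply: ltn_trans rM1 HM1.
  have rn : Ordinal rl != ord_max.
    apply/eqP => /(congr1 val) /= rE; move: HM1 rM1; rewrite rE /M1; lia.
  have := Hc _ rn.
  have rdiv : (r %/ n = unbump (cpi p) i)%N.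
    by rewrite /r divnMDl // divn_small // addn0.
  have rmod : (r %% n = j)%N by rewrite /r modnMDl modn_small.
  have bi : bump (cpi p) (unbump (cpi p) i) = i by rewrite unbumpK //= inE eq_sym.
  under eq_bigr => k _ do rewrite mxE /= rM1 rdiv rmod bi.
  move=> H; apply/eqP; rewrite -subr_eq0 mulr_sumr -sumrB; apply/eqP.
  rewrite -[RHS]H; apply: eq_bigr => k _; ring.
move=> t tl.
have rl : (M1 + t < l)%N by apply: ltn_trans tl _.
have rn : Ordinal rl != ord_max.
  by apply/eqP => /(congr1 val) /= rE; move: tl; rewrite rE ltnn.
have := Hc _ rn.
have nM : (M1 + t < M1)%N = false by rewrite -{2}[M1]addn0 ltn_add2l.
under eq_bigr => k _ do rewrite mxE /= nM tl addKn.
by [].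
Qed.

Lemma upper (T : tensor R m n l) : \det (Cmat T) != 0 -> rank_le T l.
Proof.
move=> dC.
have Cu : Cmat T \in unitmx by rewrite unitmxE unitfE.
set D := invmx (Cmat T).
exists (fun p i => cx p i),
  (fun p j => \sum_k Cmat T p k * T (inord (cpi p)) j k),
  (fun p k => D k p) => i j k.
transitivity (\sum_p D k p * \sum_k' Cmat T p k' * T i j k').
  symmetry.
  rewrite (eq_bigr (fun p => \sum_k' D k p * Cmat T p k' * T i j k')); last first.
    by move=> p _; rewrite mulr_sumr; apply: eq_bigr => k' _; rewrite mulrA.
  rewrite exchange_big /=.
  under eq_bigr => k' _ do rewrite -mulr_suml.
  have DC : forall k', \sum_p D k p * Cmat T p k' = (k == k')%:R.
    move=> k'; move: (congr1 (fun B : 'M[R]_l => B k k') (mulVmx Cu)).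
    by rewrite !mxE.
  under eq_bigr => k' _ do rewrite DC.
  rewrite (bigD1 k) //= eqxx mul1r big1 ?addr0 // => k' /negbTE.
  by rewrite eq_sym => ->; rewrite mul0r.
apply: eq_bigr => p _; rewrite key_rel; ring.
Qed.

Definition Gram (T : tensor R m n l) : 'M[R]_l :=
  \matrix_(k < l, k' < l) \sum_(i < m) \sum_(j < n) T i j k * T i j k'.

Lemma lower (T : tensor R m n l) r : rank_le T r -> \det (Gram T) != 0 -> (l <= r)%N.
Proof.
move=> [a [b [c H]]] dG; rewrite leqNgt; apply/negP => rl.
pose Cm : 'M[R]_(r, l) := \matrix_(p, k) c p k.
pose Hm : 'M[R]_r := \matrix_(p, q) \sum_(i < m) \sum_(j < n) (a p i * b p j) * (a q i * b q j).
have sum4 : forall F : 'I_m -> 'I_n -> 'I_r -> 'I_r -> R,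
    \sum_i \sum_j \sum_p \sum_q F i j p q = \sum_p \sum_q \sum_i \sum_j F i j p q.
  move=> F; under eq_bigr => i _ do rewrite exchange_big.
  under eq_bigr => i _ do under eq_bigr => p _ do rewrite exchange_big.
  rewrite exchange_big.
  by under eq_bigr => p _ do rewrite exchange_big.
have GE : Gram T = Cm^T *m (Hm *m Cm).
  apply/matrixP => k k'; rewrite !mxE.
  under eq_bigr => i _ do under eq_bigr => j _ do rewrite !H big_distrlr /=.
  rewrite sum4; apply: eq_bigr => p _.
  rewrite !mxE mulr_sumr; apply: eq_bigr => q _.
  rewrite !mxE mulr_suml mulr_sumr; apply: eq_bigr => i _.
  rewrite mulr_suml mulr_sumr; apply: eq_bigr => j _.
  ring.
have : \rank (Gram T) = l by apply: mxrank_unit; rewrite unitmxE unitfE.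
rewrite GE => rk.
have : (\rank (Cm^T *m (Hm *m Cm)) <= r)%N.
  by apply: leq_trans (mxrankM_maxl _ _) (rank_leq_col _).
by rewrite rk => /(leq_trans rl); rewrite ltnn.
Qed.

End Alg.
Section DetPoly.
Variable R : realType.

Lemma ispoly_det N k (A : seq R -> 'M[R]_k) :
  (forall i j, ispoly N (fun s => A s i j)) -> ispoly N (fun s => \det (A s)).
Proof.
move=> HA; rewrite /determinant.
apply: (@ispoly_sumF _ _ _ xpredT) => sg.
apply: ispoly_mul; first exact: ispoly_cst.
by apply: ispoly_prodF => i; exact: HA.
Qed.

Lemma ispoly_adj N k (A : seq R -> 'M[R]_k) :
  (forall i j, ispoly N (fun s => A s i j)) ->
  forall i j, ispoly N (fun s => \adj (A s) i j).
Proof.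
move=> HA i j; apply: (ispoly_ext (f := fun s => cofactor (A s) j i)).
  by move=> s; rewrite mxE.
rewrite /cofactor; apply: ispoly_mul; first exact: ispoly_cst.
apply: (ispoly_det (A := fun s => row' j (col' i (A s)))) => a b.
apply: (ispoly_ext (f := fun s => A s (lift j a) (lift i b))); last exact: HA.
by move=> s; rewrite !mxE.
Qed.

Variable l' : nat.
Local Notation l := l'.+1.

Lemma cof_span (B : 'M[R]_l) (v : 'I_l -> R) (js : 'I_l) : v js != 0 ->
  (forall c : 'I_l -> R, (forall r : 'I_l, r != ord_max -> \sum_k B r k * c k = 0) ->
     exists t, forall k, c k = t * v k) ->
  exists2 t, t != 0 & forall k, \adj B k ord_max = t * v k.
Proof.
move=> vjs Hker.
have [t Ht] := Hker (fun k => \adj B k ord_max) (fun r rn => adj_ker B rn).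
exists t => //; apply/negP => /eqP t0.
pose B' : 'M[R]_l := \matrix_(r, k) if r == ord_max then (k == js)%:R else B r k.
have cofE : cofactor B' ord_max js = cofactor B ord_max js.
  rewrite /cofactor; congr (_ * \det _); apply/matrixP => a b.
  by rewrite !mxE eq_sym (negbTE (neq_lift _ _)).
have dB' : \det B' = 0.
  rewrite (expand_det_row _ ord_max) (bigD1 js) //= big1.
    rewrite mxE eqxx eqxx mul1r addr0 cofE.
    by have := Ht js; rewrite t0 mul0r mxE.
  by move=> k kn; rewrite mxE eqxx (negbTE kn) mul0r.
have /det0P [x x0 xB] : \det B'^T == 0 by rewrite det_tr dB'.
have xker : forall r : 'I_l, r != ord_max -> \sum_k B r k * x 0 k = 0.
  move=> r rn; have := congr1 (fun M : 'rV[R]_l => M 0 r) xB.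
  rewrite !mxE => H; rewrite -[RHS]H; apply: eq_bigr => k _; rewrite !mxE (negbTE rn); ring.
have [t' Ht'] := Hker (fun k => x 0 k) xker.
have xjs : x 0 js = 0.
  have := congr1 (fun M : 'rV[R]_l => M 0 ord_max) xB; rewrite !mxE.
  rewrite (bigD1 js) //= big1 ?addr0; last first.
    by move=> k kn; rewrite !mxE eqxx (negbTE kn) mulr0.
  by rewrite !mxE !eqxx mulr1 => ->.
have t'0 : t' = 0.
  by move: xjs; rewrite Ht' => /eqP; rewrite mulf_eq0 (negbTE vjs) orbF => /eqP.
apply: (negP x0); apply/eqP/rowP => k; rewrite mxE.
by have := Ht' k; rewrite t'0 mul0r.
Qed.

Lemma det_from_spans (C : 'M[R]_l) (v : 'I_l -> 'I_l -> R) :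
  (forall p, exists2 t, t != 0 & forall k, C p k = t * v p k) ->
  (forall w : 'I_l -> R, (forall k, \sum_p w p * v p k = 0) -> forall p, w p = 0) ->
  \det C != 0.
Proof.
move=> Hsp Hind; apply/negP => /det0P [w w0 wC].
have [t Ht] : exists t : 'I_l -> R, forall p, t p != 0 /\ forall k, C p k = t p * v p k.
  have H : forall p, exists t, t != 0 /\ forall k, C p k = t * v p k.
    by move=> p; have [t t0 Ht] := Hsp p; exists t.
  by exists (fun p => projT1 (cid (H p))) => p; exact: (projT2 (cid (H p))).
have := Hind (fun p => w 0 p * t p).
have Hk : forall k, \sum_p w 0 p * t p * v p k = 0.
  move=> k; have := congr1 (fun M : 'rV[R]_l => M 0 k) wC; rewrite !mxE => HH; rewrite -[RHS]HH.
  apply: eq_bigr => p _; have [_ ->] := Ht p; ring.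
move=> /(_ Hk) Hw; apply: (negP w0); apply/eqP/rowP => p.
rewrite mxE; have := Hw p; move/eqP; rewrite mulf_eq0.
by have [tp _] := Ht p; rewrite (negbTE tp) orbF => /eqP.
Qed.
End DetPoly.
Section WitDefs.
Variable R : realType.
Variables m' n' l' : nat.
Local Notation m := m'.+1.
Local Notation n := n'.+1.
Local Notation l := l'.+1.
Hypothesis Hm : (0 < m')%N.
Hypothesis HM1 : (M1 m' n' < l)%N.
Hypothesis Hl : (l < m * n)%N.

Definition ee := (l - M1 m' n')%N.
Lemma ee_gt0 : (0 < ee)%N. Proof. by rewrite /ee subn_gt0. Qed.
Lemma ee_le : (ee <= n')%N. Proof. move: Hl HM1; rewrite /ee /M1; nia. Qed.
Lemma lE : l = (M1 m' n' + ee)%N. Proof. by rewrite /ee subnKC // ltnW. Qed.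
Lemma M1E : M1 m' n' = (m' * n)%N. Proof. by []. Qed.

Definition sl (i j : nat) := (ee + (i - 1) * n + j)%N.
Definition srow (k : nat) := ((k - ee) %/ n + 1)%N.
Definition scol (k : nat) := ((k - ee) %% n)%N.

Lemma sl_lt i j : (1 <= i < m)%N -> (j < n)%N -> (sl i j < l)%N.
Proof.
move=> /andP [i1 im] jn; rewrite lE M1E /sl.
have : (i - 1 <= m' - 1)%N by lia.
move=> H; have H2 : ((i - 1) * n <= (m' - 1) * n)%N by rewrite leq_mul2r H orbT.
have H3 : ((m' - 1) * n + n = m' * n)%N.
  by rewrite -mulSnr; congr (_ * _)%N; lia.
lia.
Qed.

Lemma sl_ge i j : (ee <= sl i j)%N. Proof. by rewrite /sl -addnA leq_addr. Qed.

Lemma srow_sl i j : (1 <= i)%N -> (j < n)%N -> srow (sl i j) = i.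
Proof.
move=> i1 jn; rewrite /srow /sl -addnA addKn divnMDl // divn_small // addn0.
lia.
Qed.

Lemma scol_sl i j : (j < n)%N -> scol (sl i j) = j.
Proof. by move=> jn; rewrite /scol /sl -addnA addKn modnMDl modn_small. Qed.

Lemma sl_srow k : (ee <= k)%N -> sl (srow k) (scol k) = k.
Proof.
move=> ek; rewrite /sl /srow /scol addnK -addnA -divn_eq; lia.
Qed.

Lemma srow_bd k : (ee <= k)%N -> (k < l)%N -> (1 <= srow k < m)%N.
Proof.
move=> ek kl; rewrite /srow; apply/andP; split; first by rewrite addn1.
have : ((k - ee) %/ n < m')%N.
  by rewrite ltn_divLR //; move: kl; rewrite lE M1E; lia.
lia.
Qed.

Lemma scol_bd k : (scol k < n)%N. Proof. by rewrite /scol ltn_mod. Qed.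

Lemma sl_inj i j i2 j2 : (1 <= i)%N -> (j < n)%N -> (1 <= i2)%N -> (j2 < n)%N ->
  sl i j = sl i2 j2 -> i = i2 /\ j = j2.
Proof.
move=> i1 jn i21 j2n E.
split; first by rewrite -(srow_sl i1 jn) E srow_sl.
by rewrite -(scol_sl i jn) E scol_sl.
Qed.

Definition mu (j : nat) := if j == ee then 0%N else j.-1.
Definition inK (j : nat) := ((0 < j)%N && (j < ee)%N) || (j == n').
Definition kK (u : nat) := if (u < ee.-1)%N then u.+1 else n'.
Definition kinv (j : nat) := if (j < ee)%N then j.-1 else ee.-1.
Definition depth (j : nat) := if j == 0%N then 1%N else (j - ee + 2)%N.

Lemma kinv_bd j : (kinv j < ee)%N.
Proof. have := ee_gt0; rewrite /kinv; case: ifP; lia. Qed.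

Lemma kKinv j : inK j -> kK (kinv j) = j.
Proof.
have := ee_le; have := ee_gt0.
rewrite /inK /kK /kinv => e1 e2 /orP [/andP [j0 je]|/eqP jn].
  rewrite je; case: ifP => H; lia.
rewrite jn (_ : (n' < ee)%N = false); last by apply/negbTE; rewrite -leqNgt.
by rewrite ltnn.
Qed.

Lemma kK_inK u : (u < ee)%N -> inK (kK u) /\ kinv (kK u) = u.
Proof.
have := ee_le; have := ee_gt0.
rewrite /inK /kK /kinv => e1 e2 ue; case: ifP => H.
  split; first by apply/orP; left; apply/andP; split; lia.
  by rewrite ifT; lia.
split; first by rewrite eqxx orbT.
by rewrite ifF; lia.
Qed.

Lemma kinv_inj j j2 : inK j -> inK j2 -> kinv j = kinv j2 -> j = j2.
Proof. by move=> H1 H2 E; rewrite -(kKinv H1) E kKinv. Qed.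

Lemma notK j : (j < n)%N -> ~~ inK j -> j = 0%N \/ (ee <= j < n')%N.
Proof.
have := ee_le; have := ee_gt0; rewrite /inK => e1 e2 jn.
rewrite negb_or negb_and -!leqNgt => /andP [/orP [j0|je] jn'].
  by left; lia.
by right; apply/andP; split => //; move: jn'; lia.
Qed.

Lemma mu_pre j : (j < n)%N -> ~~ inK j ->
  exists j2, [/\ (ee <= j2)%N, (j2 < n)%N & mu j2 = j].
Proof.
move=> jn /(notK jn) [->|/andP [H1 H2]].
  exists ee; split => //; first exact: ee_le. by rewrite /mu eqxx.
exists j.+1; split; [lia|lia|].
by rewrite /mu; case: ifP => //; move/eqP; lia.
Qed.

Lemma mu_bd j : (ee <= j)%N -> (j < n)%N -> (mu j < n)%N /\ ~~ inK (mu j).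
Proof.
have := ee_le; have := ee_gt0; rewrite /mu /inK => e1 e2 ej jn.
case: ifP => [_|/eqP H]; first by split => //; rewrite ltnn /=; apply/eqP; lia.
split; first lia.
rewrite negb_or; apply/andP; split; first by rewrite negb_and -!leqNgt; apply/orP; right; lia.
apply/eqP; lia.
Qed.

Lemma mu_lt j : (ee <= j)%N -> (mu j < j)%N.
Proof. have := ee_gt0; rewrite /mu => e1 ej; case: ifP => _; lia. Qed.


Definition Twn (i j k : nat) : R :=
  if i == 0%N then
    (if (j < ee)%N then (k == j)%:R else \sum_(1 <= i' < m) (k == sl i' (mu j))%:R)
  else (k == sl i j)%:R.
Definition Tw : tensor R m n l := fun i j k => Twn i j k.

Definition cxw (p i : nat) : R :=
  if (p < ee)%N then (i == 0%N)%:R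
  else if inK (scol p) then (i == srow p)%:R
  else (i == 0%N)%:R + (depth (scol p))%:R * (i == srow p)%:R.
Definition cpiw (p : nat) : nat :=
  if (p < ee)%N then 0%N else if inK (scol p) then srow p else 0%N.
Definition cJw (p t : nat) : nat :=
  if (p < ee)%N then bump p t
  else if inK (scol p) then sl (srow p) (kK (bump (kinv (scol p)) t))
  else t.+1.

Lemma Hpivw : forall p : 'I_l, (cpiw p < m)%N /\ cxw p (cpiw p) = 1.
Proof.
move=> p; rewrite /cpiw /cxw; case: ifP => pe; first by rewrite eqxx.
have pe' : (ee <= p)%N by rewrite leqNgt pe.
have /andP [s1 s2] := srow_bd pe' (ltn_ord p).
case: ifP => pk; first by rewrite eqxx.
split => //; rewrite eqxx eq_sym; have -> : (srow p == 0%N) = false by lia.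
by rewrite mulr0 addr0.
Qed.

Definition ext (c : 'I_l -> R) (k : nat) : R := if (k < l)%N then c (inord k) else 0.

Lemma ext_ord c (k : 'I_l) : ext c k = c k.
Proof. by rewrite /ext ltn_ord inord_val. Qed.

Lemma sum_ind c a : \sum_(k < l) ((k:nat) == a)%:R * c k = ext c a.
Proof.
rewrite /ext; case: ifP => al.
  rewrite (bigD1 (inord a)) //= inordK // eqxx mul1r big1 ?addr0 // => k kn.
  have -> : ((k : nat) == a) = false.
    by apply/negbTE; apply: contra kn => /eqP <-; rewrite inord_val.
  by rewrite mul0r.
rewrite big1 // => k _; have -> : ((k : nat) == a) = false.
  by apply/negbTE/eqP => ka; move: al; rewrite -ka ltn_ord.
by rewrite mul0r.
Qed.

Lemma Mc c i j : (i < m)%N -> (j < n)%N ->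
  \sum_k Text Tw i j k * c k =
  (if i == 0%N then (if (j < ee)%N then ext c j
     else \sum_(1 <= i' < m) ext c (sl i' (mu j)))
   else ext c (sl i j)).
Proof.
move=> im jn.
have TE : forall k, Text Tw i j k = Twn i j k by move=> k; rewrite /Text /Tw !inordK.
under eq_bigr => k _ do rewrite TE.
rewrite /Twn; case: (i == 0%N); last exact: sum_ind.
case: ifP => _; first exact: sum_ind.
under eq_bigr => k _ do rewrite mulr_suml.
rewrite exchange_big /=; apply: eq_big_nat => i' _; exact: sum_ind.
Qed.

Lemma sum_collapse (F : nat -> R) i0 : (1 <= i0 < m)%N ->
  (forall i, (1 <= i < m)%N -> i != i0 -> F i = 0) ->
  \sum_(1 <= i < m) F i = F i0.
Proof.
move=> /andP [i1 im] F0.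
rewrite (@big_cat_nat _ _ _ i0) //= ?(ltnW im) //.
rewrite (@big_cat_nat _ _ _ i0.+1 i0) //= big_nat1.
rewrite !big1_seq ?add0r ?addr0 // => i /andP [_]; rewrite mem_index_iota => H;
  apply: F0; lia.
Qed.

Definition yv (s : R) (j : nat) : R :=
  if j == 0%N then s else if (j < ee)%N then 0 else s ^+ (j - ee + 2).
Definition vn (p k : nat) : R :=
  if (p < ee)%N then (k == p)%:R
  else if inK (scol p) then (k == p)%:R
  else if (k < ee)%N then (k == 0%N)%:R
  else if srow k == srow p then yv (depth (scol p))%:R (scol k) else 0.

Lemma l'E : l' = (M1 m' n' + ee.-1)%N.
Proof. have := lE; have := ee_gt0; lia. Qed.

Lemma kerw (p : 'I_l) (c : 'I_l -> R) :
  (forall r : 'I_l, r != ord_max -> \sum_k Base cxw cpiw cJw Tw p r k * c k = 0) ->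
  exists t, forall k : 'I_l, c k = t * vn p k.
Proof.
move=> Hc; have [C1 C2] := base_constr HM1 Hpivw Hc.
set f := ext c.
have C2' : forall t, (t < ee.-1)%N -> f (cJw p t) = 0.
  move=> t tl; rewrite /f -sum_ind; apply: C2; rewrite l'E; lia.
have C1' : forall i j, (i < m)%N -> (j < n)%N -> i != cpiw p ->
   (if i == 0%N then (if (j < ee)%N then f j
     else \sum_(1 <= i' < m) f (sl i' (mu j))) else f (sl i j)) =
   cxw p i * (if cpiw p == 0%N then (if (j < ee)%N then f j
     else \sum_(1 <= i' < m) f (sl i' (mu j))) else f (sl (cpiw p) j)).
  move=> i j im jn ip; rewrite -!Mc //; first exact: C1.
  by have [] := Hpivw p.
suff [t Ht] : exists t, forall k, (k < l)%N -> f k = t * vn p k.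
  by exists t => k; rewrite -ext_ord; exact: Ht.
have pl := ltn_ord p.
case: (ltnP p ee) => pe.
  exists (f p) => k kl.
  have H1 : forall i j, (1 <= i < m)%N -> (j < n)%N -> f (sl i j) = 0.
    move=> i j /andP [i1 im] jn; have := C1' i j im jn.
    rewrite /cpiw /cxw pe /= (_ : (i == 0%N) = false); last by lia.
    by rewrite mul0r; apply; lia.
  rewrite /vn pe; case: (eqVneq k p) => [->|kp]; first by rewrite mulr1.
  rewrite mulr0.
  case: (ltnP k ee) => ke.
    have := C2' (unbump p k); rewrite /cJw pe unbumpK; last by rewrite inE.
    apply; move: ke kp pe; rewrite /unbump; case: ltnP => H /eqP kp' pe'; lia.
  rewrite -(sl_srow ke); apply: H1; [exact: srow_bd|exact: scol_bd].
have pe' : (ee <= p)%N by [].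
have /andP [r1 rm] := srow_bd pe' pl.
have pc := scol_bd p.
have pE := sl_srow pe'.
set i0 := srow p in r1 rm pE *; set j0 := scol p in pc pE *.
case: (boolP (inK j0)) => pk.
  have cpE : cpiw p = i0 by rewrite /cpiw ltnNge pe' /= pk.
  have cxE : forall i, cxw p i = (i == i0)%:R by move=> i; rewrite /cxw ltnNge pe' /= pk.
  have H1 : forall i j, (1 <= i < m)%N -> i != i0 -> (j < n)%N -> f (sl i j) = 0.
    move=> i j /andP [i1 im] ii jn; have := C1' i j im jn; rewrite cpE cxE (negbTE ii).
    by rewrite mul0r (_ : (i == 0%N) = false); [apply|lia].
  have H0 : forall j, (j < ee)%N -> f j = 0.
    move=> j je; have := C1' 0%N j (ltn0Sn _) (leq_trans je (ltnW (leq_ltn_trans ee_le (ltnSn _)))).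
    rewrite cpE cxE eqxx je (_ : (0 == i0)%N = false); last by lia.
    by rewrite mul0r; apply; lia.
  have H0' : forall j, (ee <= j)%N -> (j < n)%N -> f (sl i0 (mu j)) = 0.
    move=> j ej jn; have := C1' 0%N j (ltn0Sn _) jn.
    rewrite cpE cxE eqxx ltnNge ej /= (_ : (0 == i0)%N = false); last by lia.
    rewrite mul0r (sum_collapse (i0 := i0)) //; first by apply; lia.
      by rewrite r1.
    move=> i /andP [i1 im] ii; apply: H1 => //; first by rewrite i1.
    by have [] := mu_bd ej jn.
  have H2 : forall t, (t < ee.-1)%N -> f (sl i0 (kK (bump (kinv j0) t))) = 0.
    by move=> t tl; have := C2' t tl; rewrite /cJw ltnNge pe' /= pk.
  exists (f p) => k kl; rewrite /vn ltnNge pe' /= pk.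
  case: (eqVneq k p) => [->|kp]; first by rewrite mulr1.
  rewrite mulr0.
  case: (ltnP k ee) => ke; first exact: H0.
  have /andP [k1 km] := srow_bd ke kl.
  have kc := scol_bd k.
  rewrite -(sl_srow ke).
  case: (eqVneq (srow k) i0) => ki; last by apply: H1 => //; rewrite k1.
  rewrite ki.
  case: (eqVneq (scol k) j0) => kj.
    by exfalso; apply: (negP kp); apply/eqP; rewrite -(sl_srow ke) -pE ki kj.
  case: (boolP (inK (scol k))) => kk.
    have kv : kinv (scol k) != kinv j0.
      by apply: contra kj => /eqP E; apply/eqP; exact: kinv_inj.
    have bE : bump (kinv j0) (unbump (kinv j0) (kinv (scol k))) = kinv (scol k).
      by rewrite unbumpK // inE.
    have := H2 (unbump (kinv j0) (kinv (scol k))).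
    rewrite bE kKinv //; apply.
    have := kinv_bd (scol k); have := kinv_bd j0; move: kv; rewrite /unbump.
    case: ltnP => H /eqP kv' a b; lia.
  have [j2 [e2 n2 <-]] := mu_pre kc kk.
  exact: H0'.
have cpE : cpiw p = 0%N by rewrite /cpiw ltnNge pe' /= (negbTE pk).
set s := ((depth j0)%:R : R).
have cxE : forall i, cxw p i = (i == 0%N)%:R + s * (i == i0)%:R.
  by move=> i; rewrite /cxw ltnNge pe' /= (negbTE pk).
have H1 : forall i j, (1 <= i < m)%N -> i != i0 -> (j < n)%N -> f (sl i j) = 0.
  move=> i j /andP [i1 im] ii jn; have := C1' i j im jn; rewrite cpE cxE (negbTE ii).
  rewrite (_ : (i == 0%N) = false); last by lia.
  by rewrite mulr0 addr0 mul0r; apply; lia.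
have H1' : forall j, (j < n)%N -> f (sl i0 j) =
    s * (if (j < ee)%N then f j else \sum_(1 <= i' < m) f (sl i' (mu j))).
  move=> j jn; have := C1' i0 j rm jn; rewrite cpE cxE eqxx.
  rewrite (_ : (i0 == 0%N) = false); last by lia.
  by rewrite add0r mulr1; apply; lia.
have H2 : forall t, (t < ee.-1)%N -> f t.+1 = 0.
  by move=> t tl; have := C2' t tl; rewrite /cJw ltnNge pe' /= (negbTE pk).
have Y : forall j, (j < n)%N -> f (sl i0 j) = f 0%N * yv s j.
  move=> j; elim: j {-2}j (leqnn j) => [|J IH] j.
    rewrite leqn0 => /eqP -> _; rewrite H1' // ee_gt0 /yv eqxx; ring.
  move=> jJ jn; rewrite H1' // /yv.
  case: (eqVneq j 0%N) => [->|j0']; first by rewrite ee_gt0; ring.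
  case: ifP => je.
    rewrite (_ : j = (j.-1).+1); last by lia.
    by rewrite H2 ?mulr0 //; lia.
  have ej : (ee <= j)%N by rewrite leqNgt je.
  rewrite (sum_collapse (i0 := i0)); last first.
      move=> i /andP [i1 im] ii; apply: H1 => //; first by rewrite i1.
      by have [] := mu_bd ej jn.
    by rewrite r1.
  have [mun _] := mu_bd ej jn.
  rewrite IH //; last by have := mu_lt ej; lia.
  rewrite /yv /mu; case: (eqVneq j ee) => [->|jne]; first by rewrite eqxx subnn; ring.
  rewrite (_ : (j.-1 == 0%N) = false); last by have := ee_gt0; lia.
  rewrite (_ : (j.-1 < ee)%N = false); last by lia.
  rewrite (_ : (j - ee + 2 = (j.-1 - ee + 2).+1)%N); last by lia.
  by rewrite exprS; ring.
exists (f 0%N) => k kl; rewrite /vn ltnNge pe' /= (negbTE pk).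
case: (ltnP k ee) => ke.
  case: (eqVneq k 0%N) => [->|k0]; first by rewrite mulr1.
  rewrite mulr0 (_ : k = (k.-1).+1); last by lia.
  by apply: H2; lia.
have /andP [k1 km] := srow_bd ke kl.
rewrite -(sl_srow ke); case: (eqVneq (srow k) i0) => ki.
  rewrite srow_sl // ?scol_bd // scol_sl ?scol_bd // ki.
  rewrite (_ : (i0 == srow p) = true) ?eqxx // Y ?scol_bd //.
rewrite srow_sl ?scol_bd // (negbTE ki) mulr0.
by apply: H1 => //; [rewrite k1|exact: scol_bd].
Qed.

Lemma sum_blocks (F : nat -> R) a k :
  \sum_(a <= p < a + k * n) F p = \sum_(i < k) \sum_(j < n) F (a + i * n + j)%N.
Proof.
elim: k => [|k IH]; first by rewrite mul0n addn0 big_geq // big_ord0.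
rewrite big_ord_recr /= -IH (@big_cat_nat _ _ _ (a + k * n)) /=; last first.
    by rewrite leq_add2l leq_mul2r leqnSn orbT.
  by rewrite leq_addr.
congr (_ + _).
rewrite -{1}[(a + k * n)%N]add0n big_addn.
have -> : (a + k.+1 * n - (a + k * n) = n)%N by rewrite mulSnr addnA addKn.
rewrite big_mkord; apply: eq_bigr => j _; congr F; lia.
Qed.

Lemma sum_split (F : nat -> R) :
  \sum_(p < l) F p = \sum_(p < ee) F p + \sum_(1 <= i < m) \sum_(j < n) F (sl i j).
Proof.
rewrite -(big_mkord xpredT F) (@big_cat_nat _ _ _ ee) //=; last by rewrite lE leq_addl.
rewrite big_mkord; congr (_ + _).
have -> : l = (ee + m' * n)%N by rewrite lE M1E addnC.
rewrite sum_blocks big_add1 /= big_mkord; apply: eq_bigr => i _.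
by apply: eq_bigr => j _; rewrite /sl subn1 /=.
Qed.

Lemma vdm_seq (js : seq nat) (z W : nat -> R) : uniq js ->
  {in js &, injective z} -> (forall j, j \in js -> z j != 0) ->
  (forall t, (1 <= t <= size js)%N -> \sum_(j <- js) W j * z j ^+ t = 0) ->
  forall j, j \in js -> W j = 0.
Proof.
move=> ujs zinj z0 Hs j1 j1s.
pose Q := \prod_(j <- js | j != j1) ('X - (z j)%:P).
pose L := 'X * Q.
have sQ : (size Q <= size js)%N.
  rewrite /Q -big_filter size_prod_XsubC.
  have -> : [seq j <- js | j != j1] = rem j1 js by rewrite rem_filter.
  rewrite size_rem //; have : (0 < size js)%N by move: j1s; case: (js).
  by case: (size js).
have sL : (size L <= (size js).+1)%N.
  apply: leq_trans (size_mul_leq _ _) _; rewrite size_polyX; lia.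
have L0 : L`_0 = 0 by rewrite coefXM eqxx.
have HL : \sum_(j <- js) W j * L.[z j] = 0.
  under eq_bigr => j _ do rewrite (horner_coef_wide _ sL) mulr_sumr.
  rewrite exchange_big /= big1 // => t _.
  under eq_bigr => j _ do rewrite mulrCA.
  rewrite -mulr_sumr; case: (posnP t) => [->|tp]; first by rewrite L0 mul0r.
  rewrite Hs ?mulr0 //; apply/andP; split; [exact: tp|].
  by have := ltn_ord t; rewrite ltnS.
move: HL; rewrite (bigD1_seq j1) //= big1_seq ?addr0; last first.
  move=> j /andP [jn jj]; rewrite /L hornerM /Q horner_prod.
  rewrite -big_filter (bigD1_seq j) //=; last by rewrite filter_uniq.
    by rewrite hornerXsubC subrr mul0r mulr0 mulr0.
  by rewrite mem_filter jn.
move/eqP; rewrite mulf_eq0 => /orP [/eqP //|].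
rewrite /L hornerM hornerX mulf_eq0 (negbTE (z0 _ j1s)) /= /Q horner_prod.
rewrite prodf_seq_eq0 => /hasP [j jj /andP [jn]]; rewrite hornerXsubC subr_eq0 => /eqP E.
by exfalso; apply: (negP jn); apply/eqP; apply: zinj.
Qed.

Lemma sum_single (F : nat -> R) k : (k < l)%N ->
  (forall p, (p < l)%N -> p != k -> F p = 0) -> \sum_(p < l) F p = F k.
Proof.
move=> kl H; rewrite (bigD1 (inord k)) //= inordK // big1 ?addr0 // => p pk.
apply: H => //; apply: contra pk => /eqP <-; by rewrite inord_val.
Qed.

Lemma nK0 : ~~ inK 0.
Proof. rewrite /inK ltnn /=; apply/eqP; have := ee_le; have := ee_gt0; lia. Qed.

Lemma sum_nonK (G : nat -> R) :
  \sum_(j < n) (if inK j then 0 else G j) = \sum_(j <- 0%N :: index_iota ee n') G j.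
Proof.
rewrite big_cons -(big_mkord xpredT (fun j => if inK j then 0 else G j)).
have e1 := ee_gt0; have e2 := ee_le.
rewrite big_ltn // (negbTE nK0); congr (_ + _).
rewrite (@big_cat_nat _ _ _ ee) //=; last by apply: leq_trans e2 _.
rewrite (@big_nat_recr _ _ _ n' ee) /=; last exact: e2.
rewrite big1_seq ?add0r; last first.
  move=> j /andP [_]; rewrite mem_index_iota => H.
  by rewrite /inK (_ : (0 < j < ee)%N = true) //; apply/andP; lia.
rewrite /inK eqxx orbT addr0; apply: eq_big_seq => j; rewrite mem_index_iota => H.
rewrite ifF //; apply/negbTE; rewrite negb_or negb_and -!leqNgt; apply/andP; split.
  by apply/orP; right; lia.
by apply/eqP; lia.
Qed.

Lemma yv_nonK (s : R) j : (j < n)%N -> ~~ inK j -> yv s j = s ^+ depth j.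
Proof.
move=> jn /(notK jn) [->|/andP [H1 H2]]; first by rewrite /yv /depth eqxx expr1.
rewrite /yv /depth (_ : (j == 0%N) = false); last by have := ee_gt0; lia.
by rewrite ltnNge H1.
Qed.

Lemma depth_inj j j' : (j < n)%N -> ~~ inK j -> (j' < n)%N -> ~~ inK j' ->
  depth j = depth j' -> j = j'.
Proof.
move=> jn jk j'n j'k; rewrite /depth; have e1 := ee_gt0.
move: (notK jn jk) (notK j'n j'k) => [->|/andP [a b]] [->|/andP [c d]] //.
- by rewrite eqxx (_ : (j' == 0)%N = false); [lia|apply/negbTE/eqP; lia].
- by rewrite eqxx (_ : (j == 0)%N = false); [lia|apply/negbTE/eqP; lia].
- rewrite (_ : (j' == 0)%N = false); last by apply/negbTE/eqP; lia.
  by rewrite (_ : (j == 0)%N = false); [lia|apply/negbTE/eqP; lia].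
Qed.

Lemma indw (w : 'I_l -> R) : (forall k : 'I_l, \sum_p w p * vn p k = 0) ->
  forall p : 'I_l, w p = 0.
Proof.
move=> Hw.
set wn := ext w.
have HS : forall k, (k < l)%N -> \sum_(p < l) wn p * vn p k = 0.
  move=> k kl; have := Hw (inord k); rewrite inordK // => HH; rewrite -[RHS]HH.
  by apply: eq_bigr => p _; rewrite /wn ext_ord.
have e1 := ee_gt0; have e2 := ee_le.
have S1 : forall i1 j1, (1 <= i1 < m)%N -> (j1 < n)%N -> ~~ inK j1 -> wn (sl i1 j1) = 0.
  move=> i1 j1 /andP [i11 i1m] j1n j1k.
  pose js0 := 0%N :: index_iota ee n'.
  have memjs : forall j, (j \in js0) = (j < n)%N && ~~ inK j.
    move=> j; rewrite in_cons mem_index_iota; apply/idP/idP.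
      case/orP => [/eqP ->|/andP [H1 H2]]; first by rewrite nK0.
      apply/andP; split; first lia.
      rewrite /inK negb_or negb_and -!leqNgt; apply/andP; split.
        by apply/orP; right.
      by apply/eqP; lia.
    move=> /andP [jn /(notK jn) [->|H]]; first by rewrite eqxx.
    by rewrite H orbT.
  apply: (@vdm_seq js0 (fun j => (depth j)%:R) (fun j => wn (sl i1 j))); last first.
  - by rewrite memjs j1n j1k.
  - move=> t /andP [t1 tn].
    have tn' : (t <= n - ee)%N by move: tn; rewrite /= size_iota; lia.
    pose jt := if t == 1%N then 0%N else (t + ee - 2)%N.
    have jtn : (jt < n)%N by rewrite /jt; case: ifP; lia.
    have jtk : ~~ inK jt.
      rewrite /jt; case: ifP => H; first exact: nK0.
      rewrite /inK negb_or negb_and -!leqNgt; apply/andP; split.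
        by apply/orP; right; lia.
      by apply/eqP; lia.
    have djt : depth jt = t.
      rewrite /jt /depth; case: (eqVneq t 1%N) => [-> //|tn1].
      rewrite (_ : (t + ee - 2 == 0)%N = false); last by apply/negbTE/eqP; lia.
      lia.
    have kl : (sl i1 jt < l)%N by apply: sl_lt => //; rewrite i11.
    have := HS _ kl; rewrite (sum_split (fun p => wn p * vn p (sl i1 jt))) big1; last first.
      move=> p _; rewrite /vn ltn_ord (_ : (sl i1 jt == p) = false) ?mulr0 //.
      by apply/negbTE; have := sl_ge i1 jt; have := ltn_ord p; lia.
    rewrite add0r (sum_collapse (i0 := i1)); last 2 first.
    + by rewrite i11.
    + move=> i /andP [i1' im] ii; apply: big1 => j _.
      rewrite /vn ltnNge sl_ge /= scol_sl //; case: ifP => jk.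
        rewrite (_ : (sl i1 jt == sl i j) = false) ?mulr0 //.
        apply/negbTE/eqP => /(sl_inj i11 jtn i1' (ltn_ord j)) [_ E].
        by move: jtk; rewrite E jk.
      rewrite ltnNge sl_ge /= !srow_sl // (_ : (i1 == i) = false) ?mulr0 //.
      by apply/negbTE; rewrite eq_sym.
    rewrite -djt => HH; rewrite -[RHS]HH -(sum_nonK (fun j => wn (sl i1 j) * (depth j)%:R ^+ depth jt)).
    apply: eq_bigr => j _.
    rewrite /vn ltnNge sl_ge /= scol_sl //; case: ifP => jk.
      rewrite (_ : (sl i1 jt == sl i1 j) = false) ?mulr0 //.
      apply/negbTE/eqP => /(sl_inj i11 jtn i11 (ltn_ord j)) [_ E].
      by move: jtk; rewrite E jk.
    rewrite ltnNge sl_ge /= !srow_sl // eqxx scol_sl // yv_nonK //.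
  - by move=> j; rewrite memjs => /andP [_ _]; rewrite pnatr_eq0 /depth; case: ifP; lia.
  - move=> j j' /[!memjs] /andP [jn jk] /andP [j'n j'k] /eqP; rewrite eqr_nat => /eqP.
    exact: depth_inj.
  - rewrite /js0 cons_uniq iota_uniq andbT mem_index_iota; lia.
move=> p; rewrite -ext_ord -/wn.
have pl := ltn_ord p.
case: (ltnP p ee) => pe.
  have := HS _ pl; rewrite (@sum_single (fun q => wn q * vn q p) p) //.
    by rewrite /vn pe eqxx mulr1.
  move=> q ql qp; rewrite /vn; case: ifP => qe; first by rewrite eq_sym (negbTE qp) mulr0.
  case: ifP => qk; first by rewrite eq_sym (negbTE qp) mulr0.
  have qe' : (ee <= q)%N by rewrite leqNgt qe.
  rewrite -(sl_srow qe') S1 ?mul0r ?qk ?scol_bd //; exact: srow_bd.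
have /andP [r1 rm] := srow_bd pe (ltn_ord p).
case: (boolP (inK (scol p))) => pk; last first.
  by rewrite -(sl_srow pe); apply: S1 => //; [rewrite r1|exact: scol_bd].
have := HS _ pl; rewrite (@sum_single (fun q => wn q * vn q p) p) //.
  by rewrite /vn ltnNge pe /= pk eqxx mulr1.
move=> q ql qp; rewrite /vn; case: ifP => qe; first by rewrite eq_sym (negbTE qp) mulr0.
case: ifP => qk; first by rewrite eq_sym (negbTE qp) mulr0.
have qe' : (ee <= q)%N by rewrite leqNgt qe.
rewrite -(sl_srow qe') S1 ?mul0r ?qk ?scol_bd //; exact: srow_bd.
Qed.

Lemma McT c (i : 'I_m) (j : 'I_n) :
  \sum_k Tw i j k * c k =
  (if (i : nat) == 0%N then (if (j < ee)%N then ext c j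
     else \sum_(1 <= i' < m) ext c (sl i' (mu j)))
   else ext c (sl i j)).
Proof.
rewrite -Mc //; apply: eq_bigr => k _; by rewrite /Text !inord_val.
Qed.

Lemma Gw_det : \det (Gram Tw) != 0.
Proof.
apply/negP => /det0P [v v0 vG].
pose u (i : 'I_m) (j : 'I_n) := \sum_k v 0 k * Tw i j k.
have H0 : \sum_i \sum_j u i j ^+ 2 = 0.
  have : \sum_k' (v *m Gram Tw) 0 k' * v 0 k' = 0.
    by rewrite vG big1 // => k _; rewrite mxE mul0r.
  move=> HH; rewrite -[RHS]HH; symmetry; rewrite /u.
  under eq_bigr => k' _ do rewrite mxE mulr_suml.
  under eq_bigr => k' _ do under eq_bigr => k _ do rewrite mxE mulr_sumr mulr_suml.
  under [RHS]eq_bigr => i _ do under eq_bigr => j _ do rewrite expr2 big_distrlr /=.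
  rewrite exchange_big /=.
  under eq_bigr => k _ do rewrite exchange_big /=.
  rewrite exchange_big /=; apply: eq_bigr => i _.
  under eq_bigr => k _ do under eq_bigr => k' _ do rewrite mulr_sumr mulr_suml.
  under eq_bigr => k _ do rewrite exchange_big /=.
  rewrite exchange_big /=; apply: eq_bigr => j _.
  apply: eq_bigr => k _; apply: eq_bigr => k' _; ring.
have U : forall i j, u i j = 0.
  move=> i j; have := psumr_eq0P _ H0.
  move=> /(_ (fun i _ => sumr_ge0 _ (fun j _ => sqr_ge0 (u i j)))) H1.
  have := H1 i isT; move/psumr_eq0P => /(_ (fun j _ => sqr_ge0 (u i j))) /(_ j isT).
  by move/eqP; rewrite sqrf_eq0 => /eqP.
have e1 := ee_gt0; have e2 := ee_le.
have Z : forall k, (k < l)%N -> ext (fun k => v 0 k) k = 0.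
  move=> k kl; case: (ltnP k ee) => ke.
    have := U (inord 0) (inord k); rewrite /u.
    under eq_bigr => k' _ do rewrite mulrC.
    rewrite McT !inordK // ?eqxx ?ke //; lia.
  have /andP [r1 rm] := srow_bd ke kl.
  have := U (inord (srow k)) (inord (scol k)); rewrite /u.
  under eq_bigr => k' _ do rewrite mulrC.
  rewrite McT !inordK ?scol_bd // (_ : (srow k == 0)%N = false); last by lia.
  by rewrite sl_srow.
apply: (negP v0); apply/eqP/rowP => k; rewrite mxE.
have := Z k (ltn_ord k); by rewrite ext_ord.
Qed.

Lemma Cw_det : \det (Cmat cxw cpiw cJw Tw) != 0.
Proof.
apply: (@det_from_spans _ _ _ (fun p k => vn p k)); last exact: indw.
move=> p.
have [js vjs] : exists js : 'I_l, vn p js != 0.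
  case: (ltnP p ee) => pe; first by exists p; rewrite /vn pe eqxx oner_eq0.
  case: (boolP (inK (scol p))) => pk.
    by exists p; rewrite /vn ltnNge pe /= pk eqxx oner_eq0.
  by exists (inord 0); rewrite /vn ltnNge pe /= (negbTE pk) inordK // ee_gt0 eqxx oner_eq0.
have [t t0 Ht] := cof_span vjs (fun c Hc => kerw Hc).
by exists t => // k; rewrite mxE Ht.
Qed.

Definition sw : seq R :=
  mkseq (fun idx => Twn (idx %/ (n * l)) ((idx %/ l) %% n) (idx %% l)) (m * n * l).

Lemma sw_size : size sw = (m * n * l)%N.
Proof. by rewrite size_mkseq. Qed.

Lemma sw_tensor : tensor_of_seq m n l sw = Tw.
Proof.
apply/funext => i; apply/funext => j; apply/funext => k.
rewrite /tensor_of_seq /sw nth_mkseq; last first.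
  have := ltn_ord i; have := ltn_ord j; have := ltn_ord k; nia.
rewrite /Tw; congr Twn.
- have -> : ((i * n + j) * l + k = i * (n * l) + (j * l + k))%N by nia.
  rewrite divnMDl // divn_small //; first by rewrite addn0.
  have := ltn_ord j; have := ltn_ord k; nia.
- rewrite divnMDl // divn_small ?addn0 // modnMDl modn_small //.
- by rewrite modnMDl modn_small.
Qed.

End WitDefs.
Section Main.
Variable R : realType.
Variables m' n' l' : nat.
Local Notation m := m'.+1.
Local Notation n := n'.+1.
Local Notation l := l'.+1.
Hypothesis Hm : (0 < m')%N.
Hypothesis HM1 : (M1 m' n' < l)%N.
Hypothesis Hl : (l < m * n)%N.

Local Notation TS s := (tensor_of_seq m n l s).
Local Notation cx := (cxw R m' n' l').
Local Notation cpi := (cpiw m' n' l').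
Local Notation cJ := (cJw m' n' l').

Definition Pf (s : seq R) : R := \det (Gram (TS s)) * \det (Cmat cx cpi cJ (TS s)).

Lemma Pf_rank s : Pf s != 0 -> tensor_rank_eq (TS s) l.
Proof.
rewrite /Pf mulf_eq0 negb_or => /andP [g0 c0]; split.
  exact: (upper HM1 (Hpivw R Hm HM1 Hl) c0).
by move=> r' Hr'; exact: lower Hr' g0.
Qed.

Lemma ispoly_TS (i : 'I_m) (j : 'I_n) (k : 'I_l) :
  ispoly (m * n * l) (fun s : seq R => TS s i j k).
Proof.
apply: ispoly_nth.
have := ltn_ord i; have := ltn_ord j; have := ltn_ord k; nia.
Qed.

Lemma Pf_poly : ispoly (m * n * l) Pf.
Proof.
apply: ispoly_mul.
  apply: (ispoly_det (A := fun s => Gram (TS s))) => k k'.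
  apply: (ispoly_ext (f := fun s => \sum_(i < m) \sum_(j < n) TS s i j k * TS s i j k')).
    by move=> s; rewrite mxE.
  apply: (@ispoly_sumF _ _ _ xpredT) => i; apply: (@ispoly_sumF _ _ _ xpredT) => j.
  by apply: ispoly_mul; exact: ispoly_TS.
apply: (ispoly_det (A := fun s => Cmat cx cpi cJ (TS s))) => p k.
apply: (ispoly_ext (f := fun s => \adj (Base cx cpi cJ (TS s) p) k ord_max)).
  by move=> s; rewrite /Cmat [RHS]mxE.
have HB : forall r k', ispoly (m * n * l) (fun s => Base cx cpi cJ (TS s) p r k').
  move=> r k'.
apply: (ispoly_ext (f := fun s => if (r < M1 m' n')%N then
    Text (TS s) (bump (cpi p) (r %/ n)) (r %% n) k'
     - cx p (bump (cpi p) (r %/ n)) * Text (TS s) (cpi p) (r %% n) k'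
  else if (r < l')%N then ((k' : nat) == cJ p (r - M1 m' n'))%:R else 0)).
  by move=> s; rewrite mxE.
case: (boolP (r < M1 m' n')%N) => H1; last first.
  by case: (boolP (r < l')%N) => H2; exact: ispoly_cst.
apply: ispoly_add; first exact: ispoly_TS.
apply: (ispoly_ext (f := fun s => (- cx p (bump (cpi p) (r %/ n))) * Text (TS s) (cpi p) (r %% n) k')).
  by move=> s; rewrite mulNr.
apply: ispoly_mul; first exact: ispoly_cst.
exact: ispoly_TS.
exact: (ispoly_adj (A := fun s => Base cx cpi cJ (TS s) p) HB k ord_max).
Qed.

Lemma Pf_wit : Pf (sw R m' n' l') != 0.
Proof.
rewrite /Pf (sw_tensor R Hm HM1 Hl) mulf_neq0 //.
  exact: (Gw_det R Hm HM1 Hl).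
exact: (Cw_det R Hm HM1 Hl).
Qed.

Lemma rank_uniq (T : tensor R m n l) r1 r2 :
  tensor_rank_eq T r1 -> tensor_rank_eq T r2 -> r1 = r2.
Proof.
move=> [h1 m1] [h2 m2]; apply/eqP; rewrite eqn_leq.
by rewrite (m1 _ h2) (m2 _ h1).
Qed.

Lemma main_sub r : typical_rank R m n l r <-> r = l.
Proof.
have sz := sw_size R m' n' l'.
split.
  move=> [r0 Hp]; apply/eqP; apply: contraT => rl.
  have : (gauss_tensor_prob m n l [set T : tensor R m n l | tensor_rank_eq T r] <= 0)%E.
    apply: (gauss_ae0 Pf_poly sz Pf_wit).
      by move=> s; rewrite /indic; case: (_ \in _); rewrite /= lee_fin ?ler01 ?lexx.
    move=> s /Pf_rank Hs; rewrite /indic.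
    suff -> : (TS s \in [set T : tensor R m n l | tensor_rank_eq T r]) = false by [].
    apply/negbTE/negP; rewrite inE /= => Hr.
    by move: rl; rewrite (rank_uniq Hr Hs) eqxx.
  by rewrite leNgt Hp.
move=> ->; split => //.
apply: (@lt_le_trans _ _ 1%E); first by rewrite lte01.
apply: (gauss_ae1 Pf_poly sz Pf_wit).
  by move=> s; rewrite /indic lee_fin ler0n.
move=> s /Pf_rank Hs; rewrite /indic.
suff -> : (TS s \in [set T : tensor R m n l | tensor_rank_eq T l]) = true by [].
by apply/idP; rewrite inE.
Qed.
End Main.

Theorem mainTheorem11 (R : realType) (m n l : nat) :
  (2 <= m)%N -> (m <= n)%N -> (n <= l)%N ->
  ((m - 1) * n < l)%N -> (l < m * n)%N ->
  forall r : nat, typical_rank R m n l r <-> r = l.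
Proof.
case: m => [//|m']; case: n => [|n']; first by rewrite ltn0.
case: l => [|l']; first by rewrite ltn0.
move=> Hm _ _ HM1 Hl r.
apply: main_sub => //.
by move: HM1; rewrite /M1 subn1.
Qed.
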